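(* The hypersurface Dirac operator $D_{B} (s) = -\frac{1}{2}\sum_{i,j=1}^4 [\gamma_{\theta}^{j},\gamma_{\theta}^{i}]_\theta^{}\, \partial^\theta_i s \star_\theta z_j - \frac{3}{2}\, s$ on $\mathbb{S}^3_\theta$ coincides with the Connes–Landi Dirac operator $D_{\mathrm{CL}}(s) = -\frac{1}{2}\sum_{i,j=1}^4 [\gamma^{j},\gamma^{i}]\, \partial_i s \, z_j - \frac{3}{2}\, s$.
   Context: Let $H=\mathcal{O}(\mathbb{T}^2)$ with basis $t_{(n_1,n_2)}$, and consider its left coaction on the commutative algebra of $\mathbb{R}^4$ given by $\rho(z^1)=t_{(2,0)}\otimes z^1$, $\rho(z^2)=t_{(0,2)}\otimes z^2$, $\rho(z^3)=t_{(-2,0)}\otimes z^3$, $\rho(z^4)=t_{(0,-2)}\otimes z^4$ (complex coordinates, $z^3=\overline{z^1}$, $z^4=\overline{z^2}$), and on spinors $\mathcal{E}=A^4$ by $\rho(e_1)=t_{(1,1)}\otimes e_1$, $\rho(e_2)=t_{(-1,-1)}\otimes e_2$, $\rho(e_3)=t_{(1,-1)}\otimes e_3$, $\rho(e_4)=t_{(-1,1)}\otimes e_4$. With the 2-cocycle $\sigma_\theta(t_{(n_1,n_2)}\otimes t_{(m_1,m_2)}) = \exp(\tfrac{i\theta}{4}(n_1m_2-n_2m_1))$ one defines $a\star_\theta a' = \sigma_\theta(a_{(-1)}\otimes a'_{(-1)})\,a_{(0)}a'_{(0)}$ and $a\star_\theta s$ similarly; this yields the algebra $B$ of the Connes–Landi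 sphere $\mathbb{S}^3_\theta$ (quotient of $\mathbb{R}^4_\theta$ by $f=\tfrac12(\sum g_{ij}z^iz^j-1)$, with $(g_{ij})=\tfrac12$ times the matrix with rows $(0,0,1,0),(0,0,0,1),(1,0,0,0),(0,1,0,0)$) and its spinor module $\mathcal{E}_B=\mathcal{E}/f\mathcal{E}$. Here $z_j=\sum_k g_{jk}z^k$, $\gamma^i_\theta$ are the $\theta$-deformed gamma matrices, $\gamma^i$ their undeformed versions ($\theta=0$), $[\gamma^j_\theta,\gamma^i_\theta]_\theta=\gamma^j_\theta\gamma^i_\theta-R^{ij}\gamma^i_\theta\gamma^j_\theta$ with $R$ the commutation-relation matrix of $\mathbb{R}^4_\theta$, $\partial^\theta_i$ is defined by $\mathrm{d} a=\partial^\theta_i a\star_\theta\mathrm{d} z^i$ and $\partial_i$ by $\mathrm{d} a = \partial_i a\,\mathrm{d} z^i$ with the undeformed module structure. $D_B$ is the Dirac operator $\gamma_B\circ\nabla^{\mathrm{sp}}_B$ induced on $\mathbb{S}^3_\theta$ from the flat spinorial structure on $\mathbb{R}^4_\theta$ (expressed in terms of star-products), and $D_{\mathrm{CL}}$ is the classical Dirac operator on $\mathbb{S}^3$ regarded as an operator on the deformed spinor module. Both satisfy $D(a\star_\theta s) = a\star_\theta D(s)+\gamma_{\mathbb{S}^3}(\mathrm{d} a\otimes_{B}s)$ with the deformed tensor product and classical Clifford multiplication $\gamma_{\mathbb{S}^3}$. *)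

(* Defs.v *)
From HB Require Import structures.
From mathcomp Require Import all_boot all_algebra.
From mathcomp Require Import mpoly.
From mathcomp Require Import Rstruct.
From mathcomp.real_closed Require Import complex.
From Stdlib Require Import Reals.

Set Implicit Arguments.
Unset Strict Implicit.
Unset Printing Implicit Defensive.
Import GRing.Theory.
Local Open Scope ring_scope.

(* Complex numbers and the commutative algebra O(R^4) in complex coordinates
   z^1..z^4 (indices 0..3 here). *)
Definition Cx := complex Rdefinitions.R.
Definition Alg := {mpoly Cx[4]}.

(* Z^2-degrees (basis t_(n1,n2) of O(T^2)). *)
Definition deg2 := (int * int)%type.
Definition addd (a b : deg2) : deg2 := (a.1 + b.1, a.2 + b.2).

Definition degz (i : 'I_4) : deg2 :=
  match val i with
  | 0 => (2%:Z, 0%:Z) | 1 => (0%:Z, 2%:Z) | 2 => (- 2%:Z, 0%:Z) | _ => (0%:Z, - 2%:Z)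
  end.
Definition dege (k : 'I_4) : deg2 :=
  match val k with
  | 0 => (1%:Z, 1%:Z) | 1 => (- 1%:Z, - 1%:Z) | 2 => (1%:Z, - 1%:Z) | _ => (- 1%:Z, 1%:Z)
  end.

Definition degm (m : 'X_{1..4}) : deg2 :=
  (\sum_(i < 4) (m i)%:Z * (degz i).1, \sum_(i < 4) (m i)%:Z * (degz i).2).

Definition phase (th : Rdefinitions.R) (k : int) : Cx :=
  Complex (cos (th * k%:~R / 4)) (sin (th * k%:~R / 4)).

Definition sigma (th : Rdefinitions.R) (n m : deg2) : Cx :=
  phase th (n.1 * m.2 - n.2 * m.1).

Definition star (th : Rdefinitions.R) (a b : Alg) : Alg :=
  \sum_(m <- msupp a) \sum_(n <- msupp b)
     (a@_m * b@_n * sigma th (degm m) (degm n)) *: 'X_[m + n].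

(* b *_theta x  where x is a homogeneous generator of degree d (dz^i or e_k)
   of a free module; the result is the (undeformed) coefficient of x. *)
Definition twist (th : Rdefinitions.R) (b : Alg) (d : deg2) : Alg :=
  \sum_(m <- msupp b) (b@_m * sigma th (degm m) d) *: 'X_[m].

(* metric g_ij = 1/2 * [[0,0,1,0],[0,0,0,1],[1,0,0,0],[0,1,0,0]] *)
Definition gmet (i j : 'I_4) : Cx :=
  if (modn (addn (val i) 2) 4 == val j) then 2^-1 else 0.
Definition gmx : 'M[Cx]_4 := \matrix_(i, j) gmet i j.

Definition zlow (j : 'I_4) : Alg := \sum_(k < 4) gmet j k *: 'X_k.

Definition fsph : Alg :=
  2^-1 *: ((\sum_(i < 4) \sum_(j < 4) gmet i j *: ('X_i * 'X_j)) - 1).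

Definition spinor := 'I_4 -> Alg.

Definition gamma_homogeneous (g : 'I_4 -> 'M[Cx]_4) : Prop :=
  forall i m l, g i m l != 0 -> dege m = addd (degz i) (dege l).

(* Clifford relations {gamma^i, gamma^j} = +-2 g^{ij} (either sign convention) *)
Definition gamma_clifford (g : 'I_4 -> 'M[Cx]_4) : Prop :=
  exists eps : Cx, (eps = 1 \/ eps = -1) /\
    forall i j, g i *m g j + g j *m g i = (eps * 2 * (invmx gmx) i j)%:M.

(* theta-deformed gamma matrices:
   gamma_theta(dz^i (x)_theta e_l) = sigma(deg z^i, deg e_l) gamma(dz^i (x) e_l) *)
Definition gammath (th : Rdefinitions.R) (g : 'I_4 -> 'M[Cx]_4) (i : 'I_4) : 'M[Cx]_4 :=
  \matrix_(m, l) (sigma th (degz i) (dege l) * g i m l).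

Definition commth (th : Rdefinitions.R) (g : 'I_4 -> 'M[Cx]_4)
  (Rm : 'I_4 -> 'I_4 -> Cx) (j i : 'I_4) : 'M[Cx]_4 :=
  gammath th g j *m gammath th g i - Rm i j *: (gammath th g i *m gammath th g j).

(* D_B(s) = -1/2 sum_ij [g^j_th, g^i_th]_th d^th_i s *_th z_j - 3/2 s,
   acting on the *_theta-components s = sum_k s^k *_theta e_k *)
Definition DB (th : Rdefinitions.R) (g : 'I_4 -> 'M[Cx]_4)
  (Rm : 'I_4 -> 'I_4 -> Cx) (dth : 'I_4 -> Alg -> Alg) (s : spinor) : spinor :=
  fun k => - (2^-1 : Cx) *:
     (\sum_(i < 4) \sum_(j < 4) \sum_(l < 4)
        (commth th g Rm j i) k l *: star th (dth i (s l)) (zlow j))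
     - ((3 : Cx) / 2) *: s k.

(* D_CL(s) = -1/2 sum_ij [g^j, g^i] d_i s z_j - 3/2 s, on the classical
   components s = sum_k s^k e_k *)
Definition DCL (g : 'I_4 -> 'M[Cx]_4) (c : spinor) : spinor :=
  fun k => - (2^-1 : Cx) *:
     (\sum_(i < 4) \sum_(j < 4) \sum_(l < 4)
        (g j *m g i - g i *m g j) k l *: (mderiv i (c l) * zlow j))
     - ((3 : Cx) / 2) *: c k.

(* classical components of the spinor sum_k s^k *_theta e_k *)
Definition to_classical (th : Rdefinitions.R) (s : spinor) : spinor :=
  fun k => twist th (s k) (dege k).

(* Main.v *)
Require Import Defs.
From HB Require Import structures.
From mathcomp Require Import all_boot all_algebra.
From mathcomp Require Import mpoly.
From mathcomp Require Import Rstruct.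
From mathcomp.real_closed Require Import complex.
From Stdlib Require Import Reals Lra.
From mathcomp Require Import ring.
Import GRing.Theory.
Local Open Scope ring_scope.


Definition Lmap (h : 'X_{1..4} -> Alg) (p : Alg) : Alg :=
  \sum_(m <- msupp p) p@_m *: h m.

Lemma Lmap_ext h p (r : seq 'X_{1..4}) : uniq r -> {subset msupp p <= r} ->
  Lmap h p = \sum_(m <- r) p@_m *: h m.
Proof.
move=> ur sub; rewrite /Lmap [RHS](bigID (fun m => m \in msupp p)) /=.
rewrite [X in _ = _ + X]big1 ?addr0; last first.
  by move=> m /memN_msupp_eq0 ->; rewrite scale0r.
rewrite -[RHS]big_filter; apply: perm_big; apply: uniq_perm.
- exact: msupp_uniq.
- exact: filter_uniq.
by move=> m; rewrite mem_filter; case E: (m \in msupp p) => //=; rewrite (sub _ E).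
Qed.

Lemma LmapD h p q : Lmap h (p + q) = Lmap h p + Lmap h q.
Proof.
set r := undup (msupp p ++ msupp q ++ msupp (p + q)).
have ur : uniq r by exact: undup_uniq.
rewrite !(@Lmap_ext h _ r) //; last 3 first.
- by move=> m Hm; rewrite mem_undup !mem_cat Hm ?orbT.
- by move=> m Hm; rewrite mem_undup !mem_cat Hm ?orbT.
- by move=> m Hm; rewrite mem_undup !mem_cat Hm ?orbT.
by rewrite -big_split /=; apply: eq_bigr => m _; rewrite mcoeffD scalerDl.
Qed.

Lemma LmapZ h c p : Lmap h (c *: p) = c *: Lmap h p.
Proof.
rewrite (@Lmap_ext h _ (msupp p)) ?msupp_uniq //; last exact: msuppZ_le.
rewrite /Lmap scaler_sumr; apply: eq_bigr => m _; by rewrite mcoeffZ scalerA.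
Qed.

Lemma Lmap0 h : Lmap h 0 = 0.
Proof. by rewrite /Lmap msupp0 big_nil. Qed.

Lemma LmapX h m : Lmap h 'X_[m] = h m.
Proof. by rewrite /Lmap msuppX big_seq1 mcoeffX eqxx scale1r. Qed.

Lemma twistE th b d : twist th b d = Lmap (fun m => Defs.sigma th (degm m) d *: 'X_[m]) b.
Proof. by rewrite /twist /Lmap; apply: eq_bigr => m _; rewrite scalerA. Qed.

Lemma starE th a w : star th a w = Lmap (fun m => star th 'X_[m] w) a.
Proof.
rewrite /star /Lmap; apply: eq_bigr => m _.
rewrite msuppX big_seq1 scaler_sumr; apply: eq_bigr => n _.
by rewrite scalerA mcoeffX eqxx mul1r mulrA.
Qed.
Lemma phaseD th k1 k2 : phase th k1 * phase th k2 = phase th (k1 + k2).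
Proof.
rewrite /phase /GRing.mul /=.
have -> : (th * (k1 + k2)%:~R / 4 = th * k1%:~R / 4 + th * k2%:~R / 4)%R.
  have -> : ((k1 + k2)%:~R = Rplus k1%:~R k2%:~R :> Rdefinitions.R).
    by rewrite rmorphD RplusE.
  by rewrite /Rdiv Rmult_plus_distr_l Rmult_plus_distr_r.
rewrite cos_plus sin_plus.
congr Complex; rewrite ?RminusE ?RplusE ?RmultE //.
exact: addrC.
Qed.

Lemma phase0 th : phase th 0 = 1.
Proof.
rewrite /phase /=.
have -> : (th * (0:int)%:~R / 4 = 0)%R. by rewrite mulr0z /Rdiv !RmultE mulr0 mul0r.
by rewrite cos_0 sin_0.
Qed.
Definition om (n m : deg2) : int := n.1 * m.2 - n.2 * m.1.
Definition negd (d : deg2) : deg2 := (- d.1, - d.2).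

Lemma degmD m1 m2 : degm (m1 + m2)%MM = addd (degm m1) (degm m2).
Proof.
rewrite /degm /addd /=; congr pair; rewrite -big_split /=; apply: eq_bigr => i _;
  by rewrite mnmDE PoszD mulrDl.
Qed.

Definition jbar (j : 'I_4) : 'I_4 := inord ((j + 2) %% 4).

Lemma zlowE j : zlow j = 2^-1 *: 'X_[U_(jbar j)].
Proof.
rewrite /zlow (bigD1 (jbar j)) //= big1 ?addr0.
  by rewrite /gmet /jbar /= inordK ?ltn_mod // eqxx.
move=> k Hk; rewrite /gmet; case: eqP => [E|]; last by rewrite scale0r.
by case/eqP: Hk; apply: val_inj; rewrite /jbar /= inordK ?ltn_mod // E.
Qed.

Lemma degz_jbar j : degz (jbar j) = negd (degz j).
Proof.
by case: j => [[|[|[|[|?]]]] Hj] //; rewrite /jbar /degz /negd /= inordK.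
Qed.

Lemma degmU i : degm U_(i)%MM = degz i.
Proof.
have H : forall f : 'I_4 -> int, \sum_(k < 4) (U_(i)%MM k)%:Z * f k = f i.
  move=> f; rewrite (bigD1 i) // big1 ?addr0.
    by rewrite mnm1E eqxx /= mul1r addr0.
  by move=> k Hk; rewrite mnm1E eq_sym (negbTE Hk); exact: mul0r.
by rewrite /degm !H; case: (degz i).
Qed.

Lemma LmapC h h' y : Lmap h' (Lmap h y) = Lmap (fun m => Lmap h' (h m)) y.
Proof.
elim/mpolyind: y => [|c m p _ _ IH]; first by rewrite !Lmap0.
by rewrite !LmapD !LmapZ !LmapX IH.
Qed.

Lemma eq_Lmap h1 h2 y : (forall m, h1 m = h2 m) -> Lmap h1 y = Lmap h2 y.
Proof. by move=> H; apply: eq_bigr => m _; rewrite H. Qed.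

Lemma LmapId y : Lmap (fun m => 'X_[m]) y = y.
Proof. by rewrite /Lmap -mpolyE. Qed.

Lemma sigmaE th n m : Defs.sigma th n m = phase th (om n m).
Proof. by []. Qed.

Lemma twistX th m d : twist th 'X_[m] d = Defs.sigma th (degm m) d *: 'X_[m].
Proof. by rewrite twistE LmapX. Qed.

Lemma twistD th p q d : twist th (p + q) d = twist th p d + twist th q d.
Proof. by rewrite !twistE LmapD. Qed.

Lemma twistZ th c p d : twist th (c *: p) d = c *: twist th p d.
Proof. by rewrite !twistE LmapZ. Qed.

Lemma twist_twist th y d : twist th (twist th y d) (negd d) = y.
Proof.
rewrite [twist th y d]twistE twistE LmapC -[RHS]LmapId.
apply: eq_Lmap => m; rewrite LmapZ LmapX scalerA !sigmaE phaseD.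
have -> : om (degm m) d + om (degm m) (negd d) = 0.
  by rewrite /om /negd /=; ring.
by rewrite phase0 scale1r.
Qed.

Lemma starXZ th u v c : c != 0 ->
  star th 'X_[u] (c *: 'X_[v]) = (c * Defs.sigma th (degm u) (degm v)) *: 'X_[(u + v)%MM].
Proof.
move=> c0; rewrite /star msuppX big_seq1 msuppMCX // big_seq1.
by rewrite mcoeffX eqxx mul1r mcoeffZ mcoeffX eqxx mulr1.
Qed.

Lemma starXX th u v :
  star th 'X_[u] 'X_[v] = Defs.sigma th (degm u) (degm v) *: 'X_[(u + v)%MM].
Proof.
by rewrite -[X in star _ _ X]scale1r starXZ ?oner_eq0 // mul1r.
Qed.

Lemma starD1 th p q w : star th (p + q) w = star th p w + star th q w.
Proof. by rewrite !(starE th _ w) LmapD. Qed.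

Lemma starZ1 th c p w : star th (c *: p) w = c *: star th p w.
Proof. by rewrite !(starE th _ w) LmapZ. Qed.

Lemma twist0 th d : twist th 0 d = 0.
Proof. by rewrite twistE Lmap0. Qed.

Lemma star0 th w : star th 0 w = 0.
Proof. by rewrite starE Lmap0. Qed.

Lemma inv2_neq0 : (2^-1 : Cx) != 0.
Proof. by rewrite invr_eq0 Num.Theory.pnatr_eq0. Qed.

Lemma scal_shuffle (c p1 p2 p3 p4 q : Cx) : p1 * p2 * p3 * p4 = q ->
  p1 * (c * p2 * (2^-1 * p3)) * p4 = q * c / 2.
Proof. by move=> <-; ring. Qed.

Lemma core_mono th i j e ek m : ek = addd (addd (degz i) (degz j)) e ->
 phase th (om (degz j) (addd (degz i) e) + om (degz i) e) *:
   twist th (star th (twist th (mderiv i 'X_[m]) (negd (degz i))) (zlow j)) ek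
 = mderiv i (twist th 'X_[m] e) * zlow j.
Proof.
move=> Eek; rewrite twistX mderivZ mderivX zlowE.
case: (m i =P 0%N) => [->|nz].
  by rewrite mulr0n !scale0r twist0 star0 twist0 !scaler0 mul0r.
set m' := (m - U_(i))%MM.
have Em : m = (m' + U_(i))%MM.
  rewrite submK //; apply/mnm_lepP => k; rewrite mnm1E.
  by case: eqP => [<-|]; [rewrite lt0n; apply/eqP | ].
rewrite twistZ twistX !starZ1 starXZ ?inv2_neq0 // !twistZ twistX.
rewrite -!scalerAl -scalerAr -mpolyXD !scalerA.
congr (_ *: _).
rewrite {2}Em !degmD !degmU degz_jbar Eek !sigmaE.
apply: scal_shuffle; rewrite !phaseD; congr (phase th _).
rewrite /om /addd /negd /=; ring.
Qed.

Lemma core_lin th i j e ek x : ek = addd (addd (degz i) (degz j)) e ->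
 phase th (om (degz j) (addd (degz i) e) + om (degz i) e) *:
   twist th (star th (twist th (mderiv i x) (negd (degz i))) (zlow j)) ek
 = mderiv i (twist th x e) * zlow j.
Proof.
move=> Eek; elim/mpolyind: x => [|c m p _ _ IH].
  by rewrite ?(mderiv0, twist0, star0, scaler0, mul0r).
rewrite mderivD mderivZ twistD twistZ starD1 starZ1 twistD twistZ.
rewrite [in RHS]twistD [in RHS]twistZ mderivD mderivZ mulrDl -scalerAl.
by rewrite -IH -(@core_mono th i j e ek m Eek) scalerDr !scalerA mulrC.
Qed.

Lemma Rm_rel th (Rm : 'I_4 -> 'I_4 -> Cx) i j :
  star th 'X_j 'X_i = Rm i j *: star th 'X_i 'X_j ->
  Defs.sigma th (degz j) (degz i) = Rm i j * Defs.sigma th (degz i) (degz j).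
Proof.
rewrite !starXX !degmU scalerA addmC => /(congr1 (mcoeff (U_(i) + U_(j))%MM)).
by rewrite !mcoeffZ mcoeffX eqxx !mulr1.
Qed.

Lemma term th (g : 'I_4 -> 'M[Cx]_4) Rm (dth : 'I_4 -> Alg -> Alg)
  (hhom : gamma_homogeneous g)
  (hR : forall i j : 'I_4, star th 'X_j 'X_i = Rm i j *: star th 'X_i 'X_j)
  (hd : forall (a : Alg) (i : 'I_4), twist th (dth i a) (degz i) = mderiv i a)
  x i j k l :
 commth th g Rm j i k l *: twist th (star th (dth i x) (zlow j)) (dege k)
 = (g j *m g i - g i *m g j) k l *: (mderiv i (twist th x (dege l)) * zlow j).
Proof.
have -> : dth i x = twist th (mderiv i x) (negd (degz i)) by rewrite -hd twist_twist.
rewrite /commth !mxE.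
set T := twist th _ (dege k); set S := _ * zlow j.
rewrite mulr_sumr !scalerBl !scaler_suml; congr (_ - _); apply: eq_bigr => p _;
  rewrite /gammath !mxE.
- case: (eqVneq (g j k p) 0) => [->|nj]; first by rewrite !(mulr0, mul0r, scale0r).
  case: (eqVneq (g i p l) 0) => [->|ni]; first by rewrite !(mulr0, mul0r, scale0r).
  have Hp := hhom i p l ni; have Hk := hhom j k p nj.
  have Eek : dege k = addd (addd (degz i) (degz j)) (dege l).
    by rewrite Hk Hp /addd /=; congr pair; ring.
  rewrite /S -(@core_lin th i j (dege l) (dege k) x Eek) scalerA; congr (_ *: _).
  rewrite Hp !sigmaE -phaseD; ring.
- case: (eqVneq (g i k p) 0) => [->|ni]; first by rewrite !(mulr0, mul0r, scale0r).
  case: (eqVneq (g j p l) 0) => [->|nj]; first by rewrite !(mulr0, mul0r, scale0r).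
  have Hp := hhom j p l nj; have Hk := hhom i k p ni.
  have Eek : dege k = addd (addd (degz i) (degz j)) (dege l).
    by rewrite Hk Hp /addd /=; congr pair; ring.
  rewrite /S -(@core_lin th i j (dege l) (dege k) x Eek) scalerA; congr (_ *: _).
  have HR := @Rm_rel th Rm i j (hR i j).
  rewrite !sigmaE in HR.
  have E1 : om (degz i) (dege p) = om (degz i) (degz j) + om (degz i) (dege l).
    by rewrite Hp /om /addd /=; ring.
  have E2 : om (degz j) (addd (degz i) (dege l)) = om (degz j) (degz i) + om (degz j) (dege l).
    by rewrite /om /addd /=; ring.
  rewrite !sigmaE E1 E2 -(phaseD th (om (degz i) (degz j))) -(phaseD th (om (degz j) (degz i) + om (degz j) (dege l))) -(phaseD th (om (degz j) (degz i))) HR; ring.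
Qed.

Lemma twistN th p d : twist th (- p) d = - twist th p d.
Proof. by rewrite -scaleN1r twistZ scaleN1r. Qed.

Lemma twist_sum th (F : 'I_4 -> Alg) d :
  twist th (\sum_(i < 4) F i) d = \sum_(i < 4) twist th (F i) d.
Proof.
rewrite twistE (big_morph _ (LmapD _) (Lmap0 _)).
by apply: eq_bigr => i _; rewrite twistE.
Qed.

Theorem proposition4p12
  (th : Rdefinitions.R)
  (g : 'I_4 -> 'M[Cx]_4)
  (Rm : 'I_4 -> 'I_4 -> Cx)
  (dth : 'I_4 -> Alg -> Alg)
  (hhom : gamma_homogeneous g)
  (hcl : gamma_clifford g)
  (hR : forall i j : 'I_4,
      star th 'X_j 'X_i = Rm i j *: star th 'X_i 'X_j)
  (hd : forall (a : Alg) (i : 'I_4), twist th (dth i a) (degz i) = mderiv i a) :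
  forall s : spinor, exists t : spinor, forall k : 'I_4,
    to_classical th (DB th g Rm dth s) k - DCL g (to_classical th s) k = fsph * t k.
Proof.
move=> s; exists (fun _ => 0) => k; rewrite mulr0; apply/eqP; rewrite subr_eq0; apply/eqP.
rewrite /to_classical /DB /DCL twistD twistN !twistZ twist_sum.
congr (_ *: _ - _).
apply: eq_bigr => i _; rewrite twist_sum; apply: eq_bigr => j _.
rewrite twist_sum; apply: eq_bigr => l _.
by rewrite twistZ (@term th g Rm dth hhom hR hd).
Qed.
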